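(* Let $R$ be a Prüfer domain of finite Krull dimension. Then $R$ is radically finite if and only if $R$ is a Dedekind domain whose ideal class group is a torsion group.
   Context: All rings are commutative with identity. An ideal $I$ of $R$ is called radically perfect if $\mathrm{ht}(I)=\inf\{n \mid \sqrt{I}=\sqrt{(\theta_1,\dots,\theta_n)} \text{ for some } \theta_1,\dots,\theta_n\in R\}$, and moreover, if $\mathrm{ht}(I)=0$, then $\sqrt{I}=\sqrt{(\theta)}$ for some zero divisor $\theta$ of $R$. A ring $R$ is called radically finite if every prime ideal $P$ of $R$ is radically perfect and, in addition, the set of ideals of $R$ that are generated by $\mathrm{ht}(P)$ elements and have radical $P$ has a maximal member $A$ such that there are only finitely many ideals in any chain of ideals between $A$ and $P$. *)

(* Defs.v *)
From HB Require Import structures.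
From mathcomp Require Import all_boot all_order all_algebra.
From mathcomp Require Import fraction.
From mathcomp Require Import boolp classical_sets cardinality.
Set Implicit Arguments. Unset Strict Implicit. Unset Printing Implicit Defensive.
Import Order.TTheory GRing.Theory Num.Theory.
Local Open Scope classical_set_scope.
Local Open Scope ring_scope.

Section RingIdeals.
Variable R : idomainType.

Definition is_ideal (I : set R) : Prop :=
  I 0 /\ (forall x y, I x -> I y -> I (x + y)) /\ (forall r x, I x -> I (r * x)).

Definition is_prime_ideal (P : set R) : Prop :=
  is_ideal P /\ ~ P 1 /\ (forall a b, P (a * b) -> P a \/ P b).

Definition span (s : seq R) : set R :=
  [set x | exists c : 'I_(size s) -> R, x = \sum_(i < size s) c i * s`_i].

Definition rad (I : set R) : set R := [set x | exists n : nat, I (x ^+ n)].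

Definition zero_divisor (t : R) : Prop := exists y : R, y != 0 /\ t * y = 0.

Definition prime_chain (p : nat -> set R) (n : nat) : Prop :=
  (forall i, (i <= n)%N -> is_prime_ideal (p i)) /\
  (forall i, (i < n)%N -> p i `<` p i.+1).

Definition prime_height (P : set R) (n : nat) : Prop :=
  (exists p, prime_chain p n /\ p n = P) /\
  (forall p m, prime_chain p m -> p m = P -> (m <= n)%N).

Definition ideal_height (I : set R) (n : nat) : Prop :=
  (exists P, is_prime_ideal P /\ I `<=` P /\ prime_height P n) /\
  (forall P m, is_prime_ideal P -> I `<=` P -> prime_height P m -> (n <= m)%N).

Definition finite_krull_dim : Prop :=
  exists d : nat, forall p m, prime_chain p m -> (m <= d)%N.

Definition radically_perfect (I : set R) : Prop :=
  exists n : nat, ideal_height I n /\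
    (exists s : seq R, size s = n /\ rad I = rad (span s)) /\
    (forall s : seq R, rad I = rad (span s) -> (n <= size s)%N) /\
    (n = 0%N -> exists t : R, zero_divisor t /\ rad I = rad (span [:: t])).

Definition gen_with_radical (n : nat) (P : set R) : set (set R) :=
  [set A | exists s : seq R, size s = n /\ A = span s /\ rad A = P].

Definition maximal_member (S : set (set R)) (A : set R) : Prop :=
  S A /\ (forall B, S B -> A `<=` B -> B = A).

Definition chains_between_finite (A P : set R) : Prop :=
  forall C : set (set R),
    (forall J, C J -> is_ideal J /\ A `<=` J /\ J `<=` P) ->
    (forall J1 J2, C J1 -> C J2 -> J1 `<=` J2 \/ J2 `<=` J1) ->
    finite_set C.

Definition radically_finite : Prop :=
  forall P : set R, is_prime_ideal P ->
    radically_perfect P /\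
    exists n : nat, ideal_height P n /\
      exists A : set R, maximal_member (gen_with_radical n P) A /\
                        chains_between_finite A P.

(* fractional ideals: R-submodules of the fraction field K *)
Local Notation K := {fraction R}.
Local Notation tof := (@FracField.tofrac R).

Definition Rsubmodule (M : set K) : Prop :=
  M 0 /\ (forall x y, M x -> M y -> M (x + y)) /\ (forall r x, M x -> M (tof r * x)).

Definition mprod (M N : set K) : set K :=
  [set z | exists n : nat, exists a b : 'I_n -> K,
     (forall i, M (a i) /\ N (b i)) /\ z = \sum_(i < n) a i * b i].

Definition Rimg : set K := tof @` setT.

Definition invertible_frac (M : set K) : Prop :=
  Rsubmodule M /\ exists N : set K, Rsubmodule N /\ mprod M N = Rimg.

Definition invertible_ideal (I : set R) : Prop := invertible_frac (tof @` I).

Definition prufer_domain : Prop :=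
  forall I : set R, is_ideal I -> I <> [set 0] ->
    (exists s : seq R, I = span s) -> invertible_ideal I.

Definition dedekind_domain : Prop :=
  forall I : set R, is_ideal I -> I <> [set 0] -> invertible_ideal I.

(* M^(n+1) *)
Definition mpow (M : set K) (n : nat) : set K := iter n (mprod M) M.

Definition principal_frac (M : set K) : Prop :=
  exists x : K, x != 0 /\ M = [set x * tof r | r in [set: R]].

Definition class_group_torsion : Prop :=
  forall M : set K, invertible_frac M -> exists n : nat, principal_frac (mpow M n).

End RingIdeals.

(* Main.v *)
Require Import Defs.
From mathcomp Require Import all_boot all_algebra.
From HB Require Import structures.
From mathcomp Require Import all_order fraction.
From mathcomp Require Import boolp classical_sets cardinality.
From mathcomp Require Import ring.
Require Import Defs.
Set Implicit Arguments. Unset Strict Implicit. Unset Printing Implicit Defensive.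
Import Order.TTheory GRing.Theory Num.Theory.
Local Open Scope classical_set_scope.
Local Open Scope ring_scope.

Lemma seteq (T : Type) (A B : set T) : A `<=` B -> B `<=` A -> A = B.
Proof. by move=> h1 h2; apply/seteqP; split. Qed.

Section L1.
Variable R : idomainType.
Implicit Types I J X Y : set R.

Definition pr (d : R) : set R := [set x | exists r, x = d * r].

Definition iprod I J : set R :=
  [set z | exists l : seq (R * R), (forall p, p \in l -> I p.1 /\ J p.2) /\
     z = \sum_(p <- l) p.1 * p.2].

Lemma ideal0 I : is_ideal I -> I 0. Proof. by case. Qed.
Lemma idealD I x y : is_ideal I -> I x -> I y -> I (x + y).
Proof. by case=> _ [+ _]; apply. Qed.
Lemma idealM I r x : is_ideal I -> I x -> I (r * x).
Proof. by case=> _ [_ +]; apply. Qed.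
Lemma idealMr I r x : is_ideal I -> I x -> I (x * r).
Proof. by move=> iI Ix; rewrite mulrC; apply: idealM. Qed.
Lemma idealN I x : is_ideal I -> I x -> I (- x).
Proof. by move=> iI Ix; rewrite -mulN1r; apply: idealM. Qed.
Lemma idealB I x y : is_ideal I -> I x -> I y -> I (x - y).
Proof. by move=> iI Ix Iy; apply: idealD => //; apply: idealN. Qed.

Lemma ideal_sum_seq I (T : Type) (s : seq T) (F : T -> R) :
  is_ideal I -> (forall t, I (F t)) -> I (\sum_(t <- s) F t).
Proof.
move=> iI IF; elim: s => [|t s IH]; first by rewrite big_nil; apply: ideal0.
by rewrite big_cons; apply: idealD.
Qed.

Lemma ideal_sum_seq_in I (T : eqType) (s : seq T) (F : T -> R) :
  is_ideal I -> (forall t, t \in s -> I (F t)) -> I (\sum_(t <- s) F t).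
Proof.
move=> iI; elim: s => [|t s IH] IF; first by rewrite big_nil; apply: ideal0.
rewrite big_cons; apply: idealD => //; first by apply: IF; rewrite inE eqxx.
by apply: IH => u us; apply: IF; rewrite inE us orbT.
Qed.

Lemma ideal_sum_ord I n (F : 'I_n -> R) :
  is_ideal I -> (forall i, I (F i)) -> I (\sum_(i < n) F i).
Proof. by move=> iI IF; apply: ideal_sum_seq. Qed.

Lemma idealT : is_ideal (@setT R). Proof. by []. Qed.

Lemma ideal_pr d : is_ideal (pr d).
Proof.
split; first by exists 0; rewrite mulr0.
split; first by move=> x y [a ->] [b ->]; exists (a + b); rewrite mulrDr.
by move=> r x [a ->]; exists (r * a); rewrite mulrCA.
Qed.

Lemma pr_self d : pr d d. Proof. by exists 1; rewrite mulr1. Qed.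
Lemma pr_mul d r : pr d (d * r). Proof. by exists r. Qed.

Lemma ideal_iprod I J : is_ideal I -> is_ideal (iprod I J).
Proof.
move=> iI; split; first by exists [::]; split => //; rewrite big_nil.
split.
  move=> x y [l1 [H1 ->]] [l2 [H2 ->]]; exists (l1 ++ l2); split; last by rewrite big_cat.
  by move=> p; rewrite mem_cat => /orP[/H1|/H2].
move=> r x [l [H ->]]; exists [seq (r * p.1, p.2) | p <- l]; split.
  move=> p /mapP [q /H [Iq Jq] ->] /=; split => //; exact: idealM.
by rewrite big_map mulr_sumr; apply: eq_bigr => p _; rewrite mulrA.
Qed.

Lemma iprod_prod I J a b : I a -> J b -> iprod I J (a * b).
Proof.
move=> Ia Jb; exists [:: (a, b)]; split; last by rewrite big_seq1.
by move=> p; rewrite inE => /eqP ->.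
Qed.

Lemma iprod_min I J L : is_ideal L -> (forall a b, I a -> J b -> L (a * b)) ->
  iprod I J `<=` L.
Proof.
move=> iL H z [l [Hl ->]]; apply: ideal_sum_seq_in => // p /Hl [Ip Jp].
exact: H.
Qed.

Lemma iprodS I J I' J' : I `<=` I' -> J `<=` J' -> iprod I J `<=` iprod I' J'.
Proof.
move=> II JJ z [l [Hl ->]]; exists l; split => // p /Hl [? ?]; split; auto.
Qed.

Lemma iprod_subl I J : is_ideal I -> iprod I J `<=` I.
Proof. by move=> iI; apply: iprod_min => // a b Ia _; apply: idealMr. Qed.

Lemma iprod_subr I J : is_ideal J -> iprod I J `<=` J.
Proof. by move=> iJ; apply: iprod_min => // a b _ Jb; apply: idealM. Qed.

Lemma iprodC I J : iprod I J = iprod J I.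
Proof.
suff H : forall I J, iprod I J `<=` iprod J I by apply: seteq; apply: H.
move=> I0 J0 z [l [Hl ->]]; exists [seq (p.2, p.1) | p <- l]; split.
  by move=> p /mapP [q /Hl [? ?] ->].
by rewrite big_map; apply: eq_bigr => p _; rewrite mulrC.
Qed.

Lemma iprod_mulr I J L x y : is_ideal I -> is_ideal J -> is_ideal L ->
  iprod I J x -> L y -> iprod I (iprod J L) (x * y).
Proof.
move=> iI iJ iL Hx Ly.
have iJL := ideal_iprod L iJ.
pose M := [set z | iprod I (iprod J L) (z * y)].
have iM : is_ideal M.
  split; first by rewrite /M /= mul0r; apply: ideal0; apply: ideal_iprod.
  split; first by move=> a b; rewrite /M /= mulrDl; apply: idealD; apply: ideal_iprod.
  by move=> r a; rewrite /M /= -mulrA; apply: idealM; apply: ideal_iprod.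
apply: (iprod_min iM) Hx => a b Ia Jb; rewrite /M /= -mulrA.
by apply: iprod_prod => //; apply: iprod_prod.
Qed.

Lemma iprodA_sub I J L : is_ideal I -> is_ideal J -> is_ideal L ->
  iprod (iprod I J) L `<=` iprod I (iprod J L).
Proof.
move=> iI iJ iL; apply: iprod_min; first exact: ideal_iprod.
by move=> a b Hab Lb; apply: iprod_mulr.
Qed.

Lemma iprodA I J L : is_ideal I -> is_ideal J -> is_ideal L ->
  iprod (iprod I J) L = iprod I (iprod J L).
Proof.
move=> iI iJ iL; apply: seteq; first exact: iprodA_sub.
rewrite iprodC (iprodC J L) (iprodC I J) [X in _ `<=` X]iprodC.
exact: iprodA_sub.
Qed.

Lemma iprodT I : is_ideal I -> iprod I setT = I.
Proof.
move=> iI; apply: seteq; first exact: iprod_subl.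
by move=> x Ix; rewrite -[x]mulr1; apply: iprod_prod.
Qed.

Definition scale (d : R) I : set R := [set z | exists x, I x /\ z = d * x].

Lemma iprod_pr d I : is_ideal I -> iprod (pr d) I = scale d I.
Proof.
move=> iI; apply: seteq.
  apply: iprod_min.
    split; first by exists 0; split; [apply: ideal0|rewrite mulr0].
    split; first by move=> x y [a [Ia ->]] [b [Ib ->]]; exists (a + b); split;
      [apply: idealD|rewrite mulrDr].
    by move=> r x [a [Ia ->]]; exists (r * a); split; [apply: idealM|rewrite mulrCA].
  by move=> a b [r ->] Ib; exists (r * b); split; [apply: idealM|rewrite mulrA].
by move=> z [x [Ix ->]]; apply: iprod_prod => //; apply: pr_self.
Qed.

Lemma scale_inj d I J : d != 0 -> scale d I = scale d J -> I = J.
Proof.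
move=> d0 E; apply: seteq => x Hx.
  have : scale d J (d * x) by rewrite -E; exists x.
  by case=> y [Jy /(mulfI d0) ->].
have : scale d I (d * x) by rewrite E; exists x.
by case=> y [Iy /(mulfI d0) ->].
Qed.

Lemma scale_sub d I J : d != 0 -> scale d I `<=` scale d J -> I `<=` J.
Proof.
move=> d0 E x Hx.
have : scale d J (d * x) by apply: E; exists x.
by case=> y [Jy /(mulfI d0) ->].
Qed.

Lemma scale_pr d e : scale d (pr e) = pr (d * e).
Proof.
apply: seteq.
  by move=> z [x [[r ->] ->]]; exists r; rewrite mulrA.
by move=> z [r ->]; exists (e * r); split; [exists r|rewrite mulrA].
Qed.

Lemma iprod_prpr d e : iprod (pr d) (pr e) = pr (d * e).
Proof. by rewrite iprod_pr ?scale_pr //; apply: ideal_pr. Qed.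

Lemma pr1 : pr 1 = setT.
Proof. by apply: seteq => // x _; exists x; rewrite mul1r. Qed.

End L1.

Section L2.
Variable R : idomainType.
Implicit Types I J X Y P Q A B C D U L : set R.

Definition inv I := exists J, is_ideal J /\ exists d : R, d != 0 /\ iprod I J = pr d.

Lemma iprod_shuffle A B C D : is_ideal A -> is_ideal B -> is_ideal C -> is_ideal D ->
  iprod (iprod A B) (iprod C D) = iprod (iprod A C) (iprod B D).
Proof.
move=> iA iB iC iD.
have iAB := ideal_iprod B iA; have iAC := ideal_iprod B iC.
rewrite (iprodA iA iB (ideal_iprod D iC)) -(iprodA iB iC iD) (iprodC B C) (iprodA iC iB iD).
by rewrite -(iprodA iA iC (ideal_iprod D iB)).
Qed.

Lemma iprodCA A B C : is_ideal A -> is_ideal B -> is_ideal C ->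
  iprod A (iprod B C) = iprod B (iprod A C).
Proof.
by move=> iA iB iC; rewrite -iprodA // (iprodC A B) iprodA.
Qed.

Lemma inv_cancel I X Y : is_ideal I -> inv I -> is_ideal X -> is_ideal Y ->
  iprod I X `<=` iprod I Y -> X `<=` Y.
Proof.
move=> iI [J [iJ [d [d0 E]]]] iX iY H.
have H2 : iprod J (iprod I X) `<=` iprod J (iprod I Y) by apply: iprodS.
rewrite -!iprodA // (iprodC J I) E !iprod_pr // in H2.
exact: scale_sub H2.
Qed.

Lemma inv_cancel_eq I X Y : is_ideal I -> inv I -> is_ideal X -> is_ideal Y ->
  iprod I X = iprod I Y -> X = Y.
Proof.
move=> iI vI iX iY E; apply: seteq; apply: (inv_cancel iI vI) => //; rewrite E //.
Qed.

Lemma inv_div I X : is_ideal I -> inv I -> is_ideal X -> X `<=` I ->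
  exists D, is_ideal D /\ iprod I D = X.
Proof.
move=> iI [J [iJ [d [d0 E]]]] iX XI.
pose D := [set x | iprod J X (d * x)].
have iJX : is_ideal (iprod J X) by apply: ideal_iprod.
have iD : is_ideal D.
  split; first by rewrite /D /= mulr0; apply: ideal0.
  split; first by move=> a b; rewrite /D /= mulrDr; apply: idealD.
  by move=> r a; rewrite /D /= mulrCA; apply: idealM.
have E2 : iprod J X = scale d D.
  apply: seteq.
    move=> z Hz; have : pr d z.
      by rewrite -E iprodC; apply: (iprodS (@subset_refl _ J) XI).
    by case=> r Er; exists r; split => //; rewrite /D /= -Er.
  by move=> z [x [Dx ->]].
exists D; split => //; apply: (@scale_inj _ d) => //.
rewrite -!iprod_pr //; last exact: ideal_iprod.
by rewrite (iprodCA (ideal_pr d) iI iD) iprod_pr // -E2 -iprodA // E.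
Qed.

Lemma inv_mul I J : is_ideal I -> is_ideal J -> inv I -> inv J -> inv (iprod I J).
Proof.
move=> iI iJ [I' [iI' [d [d0 E1]]]] [J' [iJ' [e [e0 E2]]]].
exists (iprod I' J'); split; first exact: ideal_iprod.
exists (d * e); split; first by rewrite mulf_neq0.
by rewrite iprod_shuffle // E1 E2 iprod_prpr.
Qed.

Lemma inv_T : inv (@setT R).
Proof.
exists setT; split => //; exists 1; split; first exact: oner_neq0.
by rewrite iprodT // pr1.
Qed.

Lemma inv_pr d : d != 0 -> inv (pr d).
Proof.
move=> d0; exists setT; split => //; exists d; split => //.
by rewrite iprodT //; apply: ideal_pr.
Qed.

Lemma inv_sub U J X d : is_ideal U -> is_ideal J -> is_ideal X -> d != 0 ->
  iprod U J = pr d -> iprod X J d -> U `<=` X.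
Proof.
move=> iU iJ iX d0 E Hd x Ux.
pose L := [set z | scale d X (x * z)].
have iL : is_ideal L.
  split; first by exists 0; split; [apply: ideal0|rewrite !mulr0].
  split.
    move=> a b [u [Xu Eu]] [v [Xv Ev]]; exists (u + v); split; first exact: idealD.
    by rewrite mulrDr Eu Ev mulrDr.
  move=> r a [u [Xu Eu]]; exists (r * u); split; first exact: idealM.
  by rewrite mulrCA Eu mulrCA.
have : L d.
  apply: (iprod_min iL) Hd => a b Xa Jb.
  have : pr d (x * b) by rewrite -E; apply: iprod_prod.
  case=> r Er; exists (a * r); split; first exact: idealMr.
  by rewrite mulrCA Er mulrCA.
by case=> y [Xy]; rewrite mulrC => /(mulfI d0) ->.
Qed.

Lemma inv_nonzero I : is_ideal I -> inv I -> exists2 x, I x & x != 0.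
Proof.
move=> iI [J [iJ [d [d0 E]]]].
have : iprod I J d by rewrite E; apply: pr_self.
move=> Hd; case: (pselect (exists2 x, I x & x != 0)) => // H; exfalso.
have : iprod I J `<=` [set 0].
  apply: iprod_min; first by split => //; split => [x y -> ->|r x ->];
    rewrite ?addr0 ?mulr0.
  move=> a b Ia _; case: (eqVneq a 0) => [->|an0]; first by rewrite mul0r.
  by exfalso; apply: H; exists a.
by move/(_ d Hd) => /= /eqP; rewrite (negbTE d0).
Qed.

End L2.

Section L3.
Variable R : idomainType.
Implicit Types I J X Y P Q A B C D U L : set R.

Lemma prime_ideal P : is_prime_ideal P -> is_ideal P. Proof. by case. Qed.
Lemma prime_not1 P : is_prime_ideal P -> ~ P 1. Proof. by case=> _ []. Qed.
Lemma prime_mul P a b : is_prime_ideal P -> P (a * b) -> P a \/ P b.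
Proof. by case=> _ [_]; apply. Qed.

Lemma prime_pow P x n : is_prime_ideal P -> P (x ^+ n) -> P x.
Proof.
move=> pP; elim: n => [|n IH]; first by rewrite expr0 => /(prime_not1 pP).
by rewrite exprS => /(prime_mul pP) [] // /IH.
Qed.

Lemma prime_mulN P a b : is_prime_ideal P -> ~ P a -> ~ P b -> ~ P (a * b).
Proof. by move=> pP Na Nb /(prime_mul pP) []. Qed.

Lemma rad_prime P : is_prime_ideal P -> rad P = P.
Proof.
move=> pP; apply: seteq => x.
  by case=> n /(prime_pow pP).
by move=> Px; exists 1%N; rewrite expr1.
Qed.

Lemma rad_sub I : I `<=` rad I.
Proof. by move=> x Ix; exists 1%N; rewrite expr1. Qed.

Lemma ideal_1 I : is_ideal I -> I 1 -> I = setT.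
Proof. by move=> iI I1; apply: seteq => // x _; rewrite -[x]mulr1; apply: idealM. Qed.

Lemma rad_in_prime I P Q : is_prime_ideal Q -> rad I = P -> I `<=` Q -> P `<=` Q.
Proof. by move=> pQ <- IQ x [n /IQ /(prime_pow pQ)]. Qed.

Definition ipw I n := iter n (iprod I) setT.

Lemma ipwS I n : ipw I n.+1 = iprod I (ipw I n). Proof. by []. Qed.
Lemma ipw0 I : ipw I 0 = setT. Proof. by []. Qed.

Lemma ideal_ipw I n : is_ideal I -> is_ideal (ipw I n).
Proof. by move=> iI; case: n => [|n] //; rewrite ipwS; apply: ideal_iprod. Qed.

Lemma ipw1 I : is_ideal I -> ipw I 1 = I.
Proof. by move=> iI; rewrite ipwS ipw0 iprodT. Qed.

Lemma iprodTl I : is_ideal I -> iprod setT I = I.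
Proof. by move=> iI; rewrite iprodC iprodT. Qed.

Lemma ipwD I m n : is_ideal I -> ipw I (m + n) = iprod (ipw I m) (ipw I n).
Proof.
move=> iI; elim: m => [|m IH]; first by rewrite add0n ipw0 iprodTl //; apply: ideal_ipw.
by rewrite addSn !ipwS IH iprodA //; apply: ideal_ipw.
Qed.

Lemma ipwM I m n : is_ideal I -> ipw I (m * n) = ipw (ipw I m) n.
Proof.
move=> iI; elim: n => [|n IH]; first by rewrite muln0.
by rewrite mulnS ipwD // IH.
Qed.

Lemma ipw_iprod I J n : is_ideal I -> is_ideal J ->
  ipw (iprod I J) n = iprod (ipw I n) (ipw J n).
Proof.
move=> iI iJ; elim: n => [|n IH]; first by rewrite !ipw0 iprodT.
by rewrite !ipwS IH iprod_shuffle //; apply: ideal_ipw.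
Qed.

Lemma ipw_pr d n : ipw (pr d) n = pr (d ^+ n).
Proof.
elim: n => [|n IH]; first by rewrite ipw0 expr0 pr1.
by rewrite ipwS IH iprod_prpr exprS.
Qed.

Lemma ipw_mem I x n : I x -> ipw I n (x ^+ n).
Proof.
move=> Ix; elim: n => [|n IH]; first by [].
by rewrite ipwS exprS; apply: iprod_prod.
Qed.

Lemma ipw_mono I m n : is_ideal I -> (m <= n)%N -> ipw I n `<=` ipw I m.
Proof.
move=> iI /subnKC <-; rewrite ipwD //; apply: iprod_subl; exact: ideal_ipw.
Qed.

Lemma ipw_sub I n : is_ideal I -> (0 < n)%N -> ipw I n `<=` I.
Proof. by move=> iI n0; rewrite -{2}(ipw1 iI); apply: ipw_mono. Qed.

Lemma ipw_prime I P n : is_prime_ideal P -> ipw I n `<=` P -> I `<=` P.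
Proof. by move=> pP H x Ix; apply: (prime_pow (n:=n) pP); apply: H; apply: ipw_mem. Qed.

Lemma rad_ipw P n : is_prime_ideal P -> (0 < n)%N -> rad (ipw P n) = P.
Proof.
move=> pP n0; apply: seteq.
  by move=> x [k Hk]; apply: (prime_pow (n:=k) pP); apply: (ipw_sub (prime_ideal pP) n0).
by move=> x Px; exists n; apply: ipw_mem.
Qed.

Lemma ideal_span (s : seq R) : is_ideal (span s).
Proof.
split; first by exists (fun=> 0); rewrite big1 // => i _; rewrite mul0r.
split.
  move=> x y [c1 ->] [c2 ->]; exists (fun i => c1 i + c2 i).
  by rewrite -big_split; apply: eq_bigr => i _; rewrite mulrDl.
move=> r x [c ->]; exists (fun i => r * c i).
by rewrite mulr_sumr; apply: eq_bigr => i _; rewrite mulrA.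
Qed.

Lemma span_sub (s : seq R) I : is_ideal I -> (forall x, x \in s -> I x) -> span s `<=` I.
Proof.
move=> iI H x [c ->]; apply: ideal_sum_ord => // i; apply: idealM => //.
by apply: H; apply: mem_nth.
Qed.

Lemma span_gen (s : seq R) x : x \in s -> span s x.
Proof.
move=> xs; have xs' := xs; rewrite -index_mem in xs'.
exists (fun j => (j == Ordinal xs')%:R).
rewrite (bigD1 (Ordinal xs')) //= eqxx mul1r nth_index // big1 ?addr0 //.
by move=> j /negbTE ->; rewrite mul0r.
Qed.

Lemma span_nil : span [::] = [set 0 : R].
Proof.
apply: seteq => x.
  by case=> c ->; rewrite big_ord0.
by move=> ->; exists (fun=> 0); rewrite big_ord0.
Qed.

Lemma span1 (t : R) : span [:: t] = pr t.
Proof.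
apply: seteq => x.
  by case=> c ->; rewrite big_ord1 /=; exists (c ord0); rewrite mulrC.
by case=> r ->; exists (fun=> r); rewrite big_ord1 /= mulrC.
Qed.

Lemma span2 (a b : R) : span [:: a; b] = [set z | exists x y, z = a * x + b * y].
Proof.
apply: seteq => z.
  case=> c ->; rewrite !big_ord_recl big_ord0 addr0 /=.
  by exists (c ord0), (c (lift ord0 ord0)); rewrite !(mulrC (c _)).
case=> x [y ->]; exists (fun i => if i == ord0 then x else y).
by rewrite !big_ord_recl big_ord0 addr0 /= !(mulrC _ a) !(mulrC _ b).
Qed.

End L3.

Lemma zorn_ne (T : Type) (S : set (set T)) (X0 : set T) : S X0 -> X0 !=set0 ->
  (forall F : set (set T), F `<=` S -> F !=set0 -> total_on F subset ->
     S (\bigcup_(X in F) X)) ->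
  exists A, S A /\ forall B, A `<` B -> ~ S B.
Proof.
move=> SX0 [x0 X0x0] HF.
pose S' := [set X : set T | X = set0 \/ S X].
have [A [S'A Amax]] : exists A, S' A /\ forall B, A `<` B -> ~ S' B.
  apply: Zorn_bigcup => F FS' Ftot.
  pose F' := [set X | F X /\ S X].
  case: (pselect (F' !=set0)) => [F'ne|F'e].
    right; have -> : \bigcup_(X in F) X = \bigcup_(X in F') X.
      apply: seteq => t [X FX Xt]; last by exists X => //; case: FX.
      case: (FS' X FX) => [E|SX]; first by rewrite E in Xt.
      by exists X.
    apply: HF => //; first by move=> X [].
    by move=> X Y [FX _] [FY _]; apply: Ftot.
  left; apply: seteq => // t [X FX Xt].
  case: (FS' X FX) => [E|SX]; first by rewrite E in Xt.
  by exfalso; apply: F'e; exists X.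
case: S'A => [A0|SA].
  exfalso; apply: (Amax X0); last by right.
  rewrite A0; split => // /(_ x0 X0x0).
  by [].
by exists A; split => // B AB SB; apply: (Amax B AB); right.
Qed.

Section L4.
Variable R : idomainType.
Implicit Types I J X Y P Q A B C D U L : set R.

Lemma chain_union_ideal (F : set (set R)) : (forall X, F X -> is_ideal X) ->
  F !=set0 -> total_on F subset -> is_ideal (\bigcup_(X in F) X).
Proof.
move=> Fi [X0 FX0] Ftot; split; first by exists X0 => //; apply: ideal0; apply: Fi.
split.
  move=> x y [X FX Xx] [Y FY Yy]; case: (Ftot X Y FX FY) => XY.
    by exists Y => //; apply: idealD => //; [apply: Fi| apply: XY].
  by exists X => //; apply: idealD => //; [apply: Fi| apply: XY].
by move=> r x [X FX Xx]; exists X => //; apply: idealM => //; apply: Fi.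
Qed.

Definition addpr I (a : R) : set R := [set z | exists m r, I m /\ z = m + a * r].

Lemma ideal_addpr I a : is_ideal I -> is_ideal (addpr I a).
Proof.
move=> iI; split; first by exists 0, 0; split; [apply: ideal0|rewrite !mulr0 addr0].
split.
  move=> x y [m1 [r1 [I1 ->]]] [m2 [r2 [I2 ->]]]; exists (m1 + m2), (r1 + r2).
  by split; [apply: idealD|rewrite mulrDr addrACA].
move=> s x [m [r [Im ->]]]; exists (s * m), (s * r); split; first exact: idealM.
by rewrite mulrDr mulrCA.
Qed.

Lemma addpr_sub I a : I `<=` addpr I a.
Proof. by move=> x Ix; exists x, 0; rewrite mulr0 addr0. Qed.

Lemma addpr_a I a : is_ideal I -> addpr I a a.
Proof. by move=> iI; exists 0, 1; split; [apply: ideal0|rewrite mulr1 add0r]. Qed.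

Lemma exists_prime I : is_ideal I -> ~ I 1 -> exists P, is_prime_ideal P /\ I `<=` P.
Proof.
move=> iI nI1.
pose S := [set M | is_ideal M /\ ~ M 1 /\ I `<=` M].
have [M [[iM [nM1 IM]] Mmax]] : exists M, S M /\ forall B, M `<` B -> ~ S B.
  apply: (@zorn_ne _ S I).
  - by rewrite /S /=; split => //; split.
  - by exists 0; apply: ideal0.
  move=> F FS Fne Ftot; split.
    by apply: chain_union_ideal => // X /FS [].
  split; first by case=> X /FS [_ []].
  by case: Fne => X FX x Ix; exists X => //; case: (FS X FX) => _ [_]; apply.
exists M; split => //; split => //; split => // a b Mab.
case: (pselect (M a)) => Ma; first by left.
case: (pselect (M b)) => Mb; first by right.
exfalso.
have one : forall c, ~ M c -> exists m r, M m /\ 1 = m + c * r.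
  move=> c Mc; case: (pselect (addpr M c 1)) => // H.
  exfalso; apply: (Mmax (addpr M c)).
    by split; [apply: addpr_sub|move=> H2; apply: Mc; apply: H2; apply: addpr_a].
  split; first exact: ideal_addpr.
  split => //; apply: subset_trans IM (@addpr_sub _ _).
have [m1 [r1 [M1 E1]]] := one a Ma; have [m2 [r2 [M2 E2]]] := one b Mb.
apply: nM1; rewrite -[1]mul1r {1}E1 E2.
have -> : (m1 + a * r1) * (m2 + b * r2) = m1 * (m2 + b * r2) + m2 * (a * r1) + (a * b) * (r1 * r2).
  by ring.
by apply: idealD => //; [apply: idealD => //|]; apply: idealMr.
Qed.

Lemma no_strict_chain (C : set (set R)) (f : nat -> set R) :
  (forall j, C (f j)) -> (forall j, f j `<` f j.+1) -> finite_set C -> False.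
Proof.
move=> Cf sf fC.
have mono : forall i j, (i <= j)%N -> f i `<=` f j.
  move=> i j /subnKC <-; elim: (j - i)%N => [|k IH]; first by rewrite addn0.
  by rewrite addnS; apply: subset_trans IH _; case: (sf (i + k)%N).
have inj : injective f.
  move=> i j Eij; apply/eqP; rewrite eqn_leq; apply/andP; split; rewrite leqNgt; apply/negP => lt.
    by case: (sf j) => _; apply; rewrite -Eij; apply: mono.
  by case: (sf i) => _; apply; rewrite Eij; apply: mono.
have : finite_set (f @^-1` C).
  by apply: finite_preimage => // i j _ _; apply: inj.
have -> : f @^-1` C = setT by apply: seteq => // i _; apply: Cf.
exact: infinite_nat.
Qed.

Lemma mono_stab (C : set (set R)) (f : nat -> set R) :
  (forall j, C (f j)) -> (forall j, f j `<=` f j.+1) -> finite_set C ->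
  exists j, f j.+1 `<=` f j.
Proof.
move=> Cf mf fC; case: (pselect (exists j, f j.+1 `<=` f j)) => // H.
exfalso; apply: (no_strict_chain Cf) fC => j; split => // H2.
by apply: H; exists j.
Qed.

End L4.

Section L5.
Variable R : idomainType.
Implicit Types I J X Y P Q A B C D U L : set R.
Local Notation K := {fraction R}.
Local Notation tof := (@FracField.tofrac R).
Implicit Types M N : set K.

Lemma tof_inj : injective tof.
Proof. by move=> x y /eqP; rewrite tofrac_eq => /eqP. Qed.

Lemma mprod_list M N (l : seq (K * K)) : (forall p, p \in l -> M p.1 /\ N p.2) ->
  mprod M N (\sum_(p <- l) p.1 * p.2).
Proof.
move=> H; exists (size l), (fun i => (nth (0,0) l i).1), (fun i => (nth (0,0) l i).2).
split; first by move=> i; apply: H; apply: mem_nth.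
by rewrite (big_nth (0,0)) big_mkord.
Qed.

Lemma mprod_elim M N z : mprod M N z -> exists l : seq (K * K),
  (forall p, p \in l -> M p.1 /\ N p.2) /\ z = \sum_(p <- l) p.1 * p.2.
Proof.
case=> n [a [b [H ->]]]; exists [seq (a i, b i) | i <- index_enum 'I_n]; split.
  by move=> p /mapP [i _ ->]; apply: H.
by rewrite big_map.
Qed.

Lemma lift_list I J (l : seq (K * K)) :
  (forall p, p \in l -> (tof @` I) p.1 /\ (tof @` J) p.2) ->
  exists l' : seq (R * R), (forall q, q \in l' -> I q.1 /\ J q.2) /\
    l = [seq (tof q.1, tof q.2) | q <- l'].
Proof.
elim: l => [|p l IH] H; first by exists [::].
have [|l' [H1 ->]] := IH; first by move=> q ql; apply: H; rewrite inE ql orbT.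
have [[x Ix Ex] [y Jy Ey]] := H p (mem_head _ _).
exists ((x, y) :: l'); split.
  by move=> q; rewrite inE => /orP [/eqP ->|/H1].
by rewrite /= Ex Ey; case: p {H Ex Ey}.
Qed.

Lemma mprod_tof I J : is_ideal I -> is_ideal J ->
  mprod (tof @` I) (tof @` J) = tof @` (iprod I J).
Proof.
move=> iI iJ; apply: seteq => z.
  case/mprod_elim => l [/lift_list [l' [H1 ->]] ->].
  exists (\sum_(q <- l') q.1 * q.2); first by exists l'.
  by rewrite rmorph_sum big_map; apply: eq_bigr => q _; rewrite rmorphM.
case=> x [l [Hl ->]] <-; rewrite rmorph_sum.
have -> : \sum_(i <- l) tof (i.1 * i.2) =
   \sum_(p <- [seq (tof q.1, tof q.2) | q <- l]) p.1 * p.2.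
  by rewrite big_map; apply: eq_bigr => q _; rewrite rmorphM.
apply: mprod_list => p /mapP [q /Hl [Iq Jq] ->] /=.
by split; [exists q.1|exists q.2].
Qed.

Lemma mpow_tof I n : is_ideal I -> mpow (tof @` I) n = tof @` (ipw I n.+1).
Proof.
move=> iI; elim: n => [|n IH]; first by rewrite ipw1.
rewrite /mpow iterS -/(mpow _ _) IH mprod_tof //; last exact: ideal_ipw.
Qed.

End L5.

Section L6.
Variable R : idomainType.
Implicit Types I J X Y P Q A B C D U L : set R.
Local Notation K := {fraction R}.
Local Notation tof := (@FracField.tofrac R).
Implicit Types M N : set K.

Lemma tof_sum (T : Type) (l : seq T) (F : T -> R) :
  tof (\sum_(i <- l) F i) = \sum_(i <- l) tof (F i).
Proof.
elim: l => [|a l IH]; first by rewrite !big_nil tofrac0.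
by rewrite !big_cons tofracD IH.
Qed.

Lemma Rimg_tof r : Rimg (tof r). Proof. by exists r. Qed.

Lemma Rimg_sum (T : eqType) (l : seq T) (F : T -> K) :
  (forall p, p \in l -> Rimg (F p)) -> Rimg (\sum_(p <- l) F p).
Proof.
elim: l => [|p l IH] H; first by rewrite big_nil; exists 0; rewrite ?tofrac0.
rewrite big_cons; have [a _ <-] := H p (mem_head _ _).
have [|b _ <-] := IH; first by move=> q ql; apply: H; rewrite inE ql orbT.
by exists (a + b); rewrite ?tofracD.
Qed.

Lemma mprod_single M N m n : M m -> N n -> mprod M N (m * n).
Proof.
move=> Mm Nn; have := @mprod_list _ M N [:: (m, n)].
rewrite big_seq1; apply => p; rewrite inE => /eqP -> //.
Qed.

Lemma inv_of_frac I : is_ideal I -> invertible_frac (tof @` I) -> inv I.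
Proof.
move=> iI [_ [N [[N0 [ND NM]] E]]].
have single : forall x nn, I x -> N nn -> exists c, tof x * nn = tof c.
  move=> x nn Ix Nn; have : mprod (tof @` I) N (tof x * nn).
    by apply: mprod_single => //; exists x.
  by rewrite E => -[c _ Ec]; exists c.
have : mprod (tof @` I) N 1 by rewrite E; exists 1 => //; rewrite tofrac1.
case/mprod_elim => l [Hl E1].
have [b0 Ib0 b00] : exists2 b0, I b0 & b0 != 0.
  case: (pselect (exists2 b0, I b0 & b0 != 0)) => // H; exfalso.
  have : \sum_(p <- l) p.1 * p.2 = 0.
    rewrite big_seq big1 // => p pl; have [[x Ix <-] _] := Hl p pl.
    case: (eqVneq x 0) => [->|xn0]; first by rewrite tofrac0 mul0r.
    by exfalso; apply: H; exists x.
  by rewrite -E1 => /eqP; rewrite oner_eq0.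
pose J := [set r | exists nn, N nn /\ tof r = tof b0 * nn].
have iJ : is_ideal J.
  split; first by exists 0; rewrite tofrac0 mulr0.
  split.
    move=> x y [n1 [N1 E1']] [n2 [N2 E2']]; exists (n1 + n2); split; first exact: ND.
    by rewrite tofracD E1' E2' mulrDr.
  move=> r x [n1 [N1 E1']]; exists (tof r * n1); split; first exact: NM.
  by rewrite tofracM E1' mulrCA.
exists J; split => //; exists b0; split => //.
apply: seteq.
  apply: iprod_min; first exact: ideal_pr.
  move=> x r Ix [nn [Nn Er]]; have [c Ec] := single x nn Ix Nn.
  exists c; apply: tof_inj; rewrite !tofracM Er -Ec; ring.
suff Hb : iprod I J b0.
  by move=> z [r ->]; apply: idealMr => //; apply: ideal_iprod.
have : forall l : seq (K * K), (forall p, p \in l -> (tof @` I) p.1 /\ N p.2) ->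
    exists l' : seq (R * R), (forall q, q \in l' -> I q.1 /\ J q.2) /\
      tof b0 * \sum_(p <- l) p.1 * p.2 = tof (\sum_(q <- l') q.1 * q.2).
  elim => [|p l0 IH] H; first by exists [::]; split => //; rewrite !big_nil mulr0 tofrac0.
  have [|l' [H1 E']] := IH; first by move=> q ql; apply: H; rewrite inE ql orbT.
  have [[x Ix Ex] Np] := H p (mem_head _ _).
  have [r Er] := single b0 p.2 Ib0 Np.
  exists ((x, r) :: l'); split.
    move=> q; rewrite inE => /orP [/eqP -> /=|/H1 //]; split => //.
    by exists p.2; split => //; rewrite Er.
  rewrite !big_cons tofracD -E' tofracM /= Ex -Er; ring.
case/(_ l Hl) => l' [H1 E']; exists l'; split => //.
by apply: tof_inj; rewrite -E' -E1 mulr1.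
Qed.

Lemma frac_of_inv I : is_ideal I -> inv I -> invertible_ideal I.
Proof.
move=> iI [J [iJ [d [d0 E]]]].
have td0 : tof d != 0 by rewrite tofrac_eq0.
split.
  split; first by exists 0; [apply: ideal0|rewrite tofrac0].
  split; first by move=> _ _ [x Ix <-] [y Iy <-]; exists (x + y); [apply: idealD|rewrite tofracD].
  by move=> r _ [x Ix <-]; exists (r * x); [apply: idealM|rewrite tofracM].
pose N := [set y | exists j, J j /\ y = tof j / tof d].
exists N; split.
  split; first by exists 0; split; [apply: ideal0|rewrite tofrac0 mul0r].
  split.
    move=> _ _ [x [Jx ->]] [y [Jy ->]]; exists (x + y); split; first exact: idealD.
    by rewrite tofracD mulrDl.
  move=> r _ [x [Jx ->]]; exists (r * x); split; first exact: idealM.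
  by rewrite tofracM mulrA.
apply: seteq => z.
  case/mprod_elim => l [Hl ->]; apply: Rimg_sum => p pl.
  have [[x Ix <-] [j [Jj ->]]] := Hl p pl.
  have : pr d (x * j) by rewrite -E; apply: iprod_prod.
  case=> c Ec; exists c => //.
  by rewrite mulrA -tofracM Ec tofracM mulrAC divff // mul1r.
case=> r _ <-.
have : iprod I J d by rewrite E; apply: pr_self.
case=> l [Hl Ed].
have -> : tof r = \sum_(p <- [seq (tof (r * q.1), tof q.2 / tof d) | q <- l]) p.1 * p.2.
  rewrite big_map.
  have -> : \sum_(i <- l) tof (r * i.1) * (tof i.2 / tof d) =
     tof r * (\sum_(i <- l) tof i.1 * tof i.2) / tof d.
    rewrite mulr_sumr mulr_suml; apply: eq_bigr => q _; rewrite tofracM; ring.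
  have -> : \sum_(i <- l) tof i.1 * tof i.2 = tof d.
    by rewrite Ed tof_sum; apply: eq_bigr => q _; rewrite tofracM.
  by rewrite mulfK.
apply: mprod_list => p /mapP [q /Hl [Iq Jq] ->] /=; split.
  by exists (r * q.1) => //; apply: idealM.
by exists q.2.
Qed.

End L6.

Section L7.
Variable R : idomainType.
Implicit Types I J X Y P Q A B C D U L : set R.
Local Notation K := {fraction R}.
Local Notation tof := (@FracField.tofrac R).
Implicit Types M N : set K.

Definition scaleK (x : K) M : set K := [set x * m | m in M].

Lemma lift_list_gen (f g : K -> K) M N (l : seq (K * K)) :
  (forall p, p \in l -> (f @` M) p.1 /\ (g @` N) p.2) ->
  exists l' : seq (K * K), (forall q, q \in l' -> M q.1 /\ N q.2) /\
    l = [seq (f q.1, g q.2) | q <- l'].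
Proof.
elim: l => [|p l IH] H; first by exists [::].
have [|l' [H1 ->]] := IH; first by move=> q ql; apply: H; rewrite inE ql orbT.
have [[x Ix Ex] [y Jy Ey]] := H p (mem_head _ _).
exists ((x, y) :: l'); split.
  by move=> q; rewrite inE => /orP [/eqP ->|/H1].
by rewrite /= Ex Ey; case: p {H Ex Ey}.
Qed.

Lemma mprod_scale x y M N : mprod (scaleK x M) (scaleK y N) = scaleK (x * y) (mprod M N).
Proof.
apply: seteq => z.
  case/mprod_elim => l [/lift_list_gen [l' [H1 ->]] ->].
  exists (\sum_(q <- l') q.1 * q.2); first by apply: mprod_list.
  by rewrite big_map mulr_sumr; apply: eq_bigr => q _ /=; ring.
case=> w /mprod_elim [l [Hl ->]] <-.
have -> : x * y * \sum_(p <- l) p.1 * p.2 =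
   \sum_(p <- [seq (x * q.1, y * q.2) | q <- l]) p.1 * p.2.
  by rewrite big_map mulr_sumr; apply: eq_bigr => q _ /=; ring.
apply: mprod_list => p /mapP [q /Hl [Mq Nq] ->] /=.
by split; [exists q.1|exists q.2].
Qed.

Lemma scaleKA x y M : scaleK x (scaleK y M) = scaleK (x * y) M.
Proof.
apply: seteq => z.
  by case=> _ [m Mm <-] <-; exists m => //; rewrite mulrA.
by case=> m Mm <-; exists (y * m); [exists m|rewrite mulrA].
Qed.

Lemma scaleK1 M : scaleK 1 M = M.
Proof.
apply: seteq => z; first by case=> m Mm <-; rewrite mul1r.
by move=> Mz; exists z => //; rewrite mul1r.
Qed.

Lemma mpowS M n : mpow M n.+1 = mprod M (mpow M n). Proof. by []. Qed.

Lemma mpow_scale x M n : mpow (scaleK x M) n = scaleK (x ^+ n.+1) (mpow M n).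
Proof.
elim: n => [|n IH]; first by rewrite expr1.
by rewrite !mpowS IH mprod_scale -exprS.
Qed.

Lemma Rsub_scale x M : Rsubmodule M -> Rsubmodule (scaleK x M).
Proof.
case=> M0 [MD MM]; split; first by exists 0 => //; rewrite mulr0.
split; first by move=> _ _ [a Ma <-] [b Mb <-]; exists (a + b); [apply: MD|rewrite mulrDr].
by move=> r _ [a Ma <-]; exists (tof r * a); [apply: MM|rewrite mulrCA].
Qed.

Lemma torsion_of :
  (forall I, is_ideal I -> inv I -> exists k, (0 < k)%N /\ exists d, ipw I k = pr d) ->
  class_group_torsion R.
Proof.
move=> H M [sM [N [sN E]]].
have : mprod M N 1 by rewrite E; exists 1 => //; rewrite tofrac1.
case/mprod_elim => l [Hl E1].
have [nn Nn nn0] : exists2 nn, N nn & nn != 0.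
  case: (pselect (exists2 nn, N nn & nn != 0)) => // H0; exfalso.
  have : \sum_(p <- l) p.1 * p.2 = 0.
    rewrite big_seq big1 // => p pl; have [_ Np] := Hl p pl.
    case: (eqVneq p.2 0) => [->|xn0]; first by rewrite mulr0.
    by exfalso; apply: H0; exists p.2.
  by rewrite -E1 => /eqP; rewrite oner_eq0.
have single : forall m, M m -> Rimg (nn * m).
  by move=> m Mm; rewrite -E mulrC; apply: mprod_single.
pose I := [set r | exists m, M m /\ tof r = nn * m].
case: (sM) => M0 [MD MM].
have iI : is_ideal I.
  split; first by exists 0; rewrite tofrac0 mulr0.
  split.
    move=> a b [m1 [M1 E1']] [m2 [M2 E2']]; exists (m1 + m2); split; first exact: MD.
    by rewrite tofracD E1' E2' mulrDr.
  move=> r a [m1 [M1 E1']]; exists (tof r * m1); split; first exact: MM.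
  by rewrite tofracM E1' mulrCA.
have EI : tof @` I = scaleK nn M.
  apply: seteq => z; first by case=> r [m [Mm Er]] <-; exists m.
  case=> m Mm <-; have [r _ Er] := single m Mm.
  by exists r => //; exists m.
have vI : inv I.
  apply: inv_of_frac => //; rewrite EI; split; first exact: Rsub_scale.
  exists (scaleK nn^-1 N); split; first exact: Rsub_scale.
  by rewrite mprod_scale divff // scaleK1.
have [k [k0 [d Ed]]] := H I iI vI.
have [r0 Ir0 r00] := inv_nonzero iI vI.
have d0 : d != 0.
  apply/eqP => d0; have : pr d (r0 ^+ k) by rewrite -Ed; apply: ipw_mem.
  by case=> r; rewrite d0 mul0r => /eqP; rewrite expf_eq0 (negbTE r00) andbF.
case: k k0 Ed => // j _ Ed.
exists j; exists (nn ^- j.+1 * tof d); split.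
  by rewrite mulf_neq0 ?invr_eq0 ?expf_neq0 // tofrac_eq0.
have : mpow (scaleK nn M) j = tof @` (pr d) by rewrite -EI mpow_tof // Ed.
rewrite mpow_scale => E2.
have -> : mpow M j = scaleK (nn ^- j.+1) (scaleK (nn ^+ j.+1) (mpow M j)).
  by rewrite scaleKA mulVf ?expf_neq0 // scaleK1.
rewrite E2; apply: seteq => z.
  by case=> _ [_ [r ->] <-] <-; exists r => //; rewrite tofracM mulrA.
case=> r _ <-; exists (tof (d * r)); first by exists (d * r) => //; exists r.
by rewrite tofracM mulrA.
Qed.

Lemma torsion_use : class_group_torsion R -> forall I, is_ideal I -> inv I ->
  exists k, (0 < k)%N /\ exists d, ipw I k = pr d.
Proof.
move=> T I iI vI; have := frac_of_inv iI vI; move/T => [n [x [x0 Ex]]].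
rewrite mpow_tof // in Ex.
have : (tof @` ipw I n.+1) x by rewrite Ex; exists 1 => //; rewrite tofrac1 mulr1.
case=> t Ht Et; exists n.+1; split => //; exists t.
apply: seteq => y.
  move=> Hy; have : (tof @` ipw I n.+1) (tof y) by exists y.
  by rewrite Ex -Et => -[r _]; rewrite -tofracM => /tof_inj <-; exists r.
by case=> r ->; apply: idealMr => //; apply: ideal_ipw.
Qed.

End L7.

Section L8.
Variable R : idomainType.
Implicit Types I J X Y P Q A B C D U L : set R.

Definition dim1 := forall Q P, is_prime_ideal Q -> is_prime_ideal P ->
  Q <> [set 0] -> Q `<` P -> False.

Lemma zero_prime : is_prime_ideal [set 0 : R].
Proof.
split; first by split => //; split => [x y -> ->|r x ->]; rewrite ?addr0 ?mulr0.
split; first by move=> /eqP; rewrite oner_eq0.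
by move=> a b /eqP; rewrite mulf_eq0 => /orP [/eqP|/eqP]; [left|right].
Qed.

Lemma nonzeroP I : is_ideal I -> I <> [set 0] -> exists2 x, I x & x != 0.
Proof.
move=> iI H; case: (pselect (exists2 x, I x & x != 0)) => // H2; exfalso; apply: H.
apply: seteq => x; last by move=> ->; apply: ideal0.
move=> Ix; case: (eqVneq x 0) => // xn0; exfalso; apply: H2; by exists x.
Qed.

Lemma nonzero_of I x : I x -> x != 0 -> I <> [set 0].
Proof. by move=> Ix x0 E; rewrite E in Ix; rewrite Ix eqxx in x0. Qed.

Lemma proper_zero_nonzero Q Z : is_ideal Z -> Z `<` Q -> Q <> [set 0].
Proof.
move=> iZ [ZQ nQZ] E; apply: nQZ; rewrite E => x ->; exact: ideal0.
Qed.

Lemma height_unique I n m : ideal_height I n -> ideal_height I m -> n = m.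
Proof.
move=> [[P [pP [IP hP]]] minn] [[P' [pP' [IP' hP']]] minm].
by apply/eqP; rewrite eqn_leq (minn _ _ pP' IP' hP') (minm _ _ pP IP hP).
Qed.

Lemma chain01 P : is_prime_ideal P -> P <> [set 0] ->
  prime_chain (fun i => if i == 0%N then [set 0] else P) 1.
Proof.
move=> pP P0; split.
  by case=> [|[|]] //= _; exact: zero_prime.
case=> // _ /=; split; first by move=> x ->; apply: ideal0; apply: prime_ideal.
move=> H; apply: P0; apply: seteq => // x ->; apply: ideal0; exact: prime_ideal.
Qed.

Lemma height1 P : dim1 -> is_prime_ideal P -> P <> [set 0] -> ideal_height P 1.
Proof.
move=> d1 pP P0; split.
  exists P; split => //; split => //; split.
    by exists (fun i => if i == 0%N then [set 0] else P); split => //; exact: chain01.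
  move=> p m [pr ch] pm; case: m pr ch pm => [|[|m]] // pr ch pm.
  exfalso; apply: (d1 (p m.+1) P) => //; first by apply: pr.
    apply: (@proper_zero_nonzero _ (p m)); first by apply: prime_ideal; apply: pr; apply: leqW.
    by apply: ch.
  by rewrite -pm; apply: ch.
move=> P' m pP' PP' [_ Hm].
have P'0 : P' <> [set 0].
  have [x Px x0] := nonzeroP (prime_ideal pP) P0.
  by apply: (nonzero_of (PP' x Px)).
by apply: (Hm (fun i => if i == 0%N then [set 0] else P') 1%N) => //; exact: chain01.
Qed.

Lemma height0 : ideal_height [set 0 : R] 0.
Proof.
split => //; exists [set 0]; split; first exact: zero_prime.
split => //; split.
  by exists (fun=> [set 0]); split => //; split => // i _; exact: zero_prime.
move=> p m [pr ch] pm; case: m pr ch pm => // m pr ch pm.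
have [sub nsub] := ch m (ltnSn m); exfalso; apply: nsub; rewrite pm => x ->.
by apply: ideal0; apply: prime_ideal; apply: pr.
Qed.

End L8.

Lemma ex_min_nat (Pn : nat -> Prop) : (exists n, Pn n) ->
  exists n, Pn n /\ forall m, Pn m -> (n <= m)%N.
Proof.
move=> [n0 Hn0]; case: (pselect (exists n, Pn n /\ forall m, Pn m -> (n <= m)%N)) => // H.
exfalso.
have : forall k n, (n <= k)%N -> ~ Pn n.
  elim => [|k IH] n nk Pn_n; apply: H; exists n; split => // m Pm;
    rewrite leqNgt; apply/negP => mn.
    by move: nk mn; rewrite leqn0 => /eqP ->.
  by apply: (IH m) => //; rewrite -ltnS; apply: leq_trans mn nk.
by move/(_ n0 n0 (leqnn _)).
Qed.

Section L9.
Variable R : idomainType.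
Implicit Types I J X Y P Q A B C D U L : set R.

Lemma pr0 : pr (0 : R) = [set 0].
Proof. by apply: seteq => x; [case=> r ->; rewrite mul0r|move=> ->; exists 0; rewrite mul0r]. Qed.

Lemma rad0 : rad [set 0 : R] = [set 0].
Proof. exact: rad_prime (zero_prime R). Qed.

Lemma not_sub_ex P Q : ~ P `<=` Q -> exists p, P p /\ ~ Q p.
Proof.
move=> H; case: (pselect (exists p, P p /\ ~ Q p)) => // H2; exfalso; apply: H => x Px.
by case: (pselect (Q x)) => // Qx; exfalso; apply: H2; exists x.
Qed.

Lemma prime_above (d1 : dim1 R) P M : is_prime_ideal P -> P <> [set 0] ->
  is_prime_ideal M -> P `<=` M -> M `<=` P.
Proof.
move=> pP P0 pM PM; case: (pselect (M `<=` P)) => // H; exfalso.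
by apply: (d1 P M) => //; split.
Qed.

Lemma above_pow (d1 : dim1 R) P L k : is_prime_ideal P -> P <> [set 0] ->
  is_ideal L -> ipw P k `<=` L -> ~ L `<=` P -> L = setT.
Proof.
move=> pP P0 iL PL LP; case: (pselect (L 1)) => [L1|nL1]; first exact: ideal_1.
have [M [pM LM]] := exists_prime iL nL1.
have PM : P `<=` M.
  by apply: (ipw_prime (n := k)) => //; apply: subset_trans PL LM.
exfalso; apply: LP; apply: subset_trans LM _; exact: prime_above.
Qed.

Hypothesis Hinv : forall I, is_ideal I -> I <> [set 0] -> inv I.

Lemma ded_dim1 : dim1 R.
Proof.
move=> Q P pQ pP Q0 [QP nPQ].
have iP := prime_ideal pP; have iQ := prime_ideal pQ.
have P0 : P <> [set 0].
  by have [x Qx x0] := nonzeroP iQ Q0; apply: (nonzero_of (QP x Qx)).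
have vP := Hinv iP P0; have vQ := Hinv iQ Q0.
have [D [iD ED]] := inv_div iP vP iQ QP.
have [p [Pp nQp]] := not_sub_ex nPQ.
have DQ : D `<=` Q.
  move=> x Dx; have : Q (p * x) by rewrite -ED; apply: iprod_prod.
  by case/(prime_mul pQ).
have EQ : iprod Q P = iprod Q setT.
  rewrite iprodT //; apply: seteq; first exact: iprod_subl.
  by rewrite iprodC -{1}ED; apply: iprodS.
have : P = setT by apply: (inv_cancel_eq iQ vQ) => //.
by move=> EP; apply: (prime_not1 pP); rewrite EP.
Qed.

Lemma powers_between P k J : is_prime_ideal P -> P <> [set 0] -> is_ideal J ->
  (0 < k)%N -> ipw P k `<=` J -> J `<=` P ->
  exists i, [/\ (0 < i)%N, (i <= k)%N & J = ipw P i].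
Proof.
move=> pP P0 iP'; have iP := prime_ideal pP; have vP := Hinv iP P0.
elim: k J iP' => // k IH J iJ _ PJ JP.
have [L [iL EL]] := inv_div iP vP iJ JP.
case: k IH PJ => [|k] IH PJ.
  by exists 1%N; split => //; rewrite ipw1 //; apply: seteq => //; rewrite -(ipw1 iP).
have PL : ipw P k.+1 `<=` L.
  by apply: (inv_cancel iP vP) => //; [apply: ideal_ipw|rewrite EL].
case: (pselect (L `<=` P)) => LP.
  have [i [i0 ik Ei]] := IH L iL isT PL LP.
  by exists i.+1; split => //; rewrite -EL Ei.
have EL1 := above_pow ded_dim1 pP P0 iL PL LP.
by exists 1%N; split => //; rewrite -EL EL1 iprodT // ipw1.
Qed.

Lemma radfin_of : class_group_torsion R -> radically_finite R.
Proof.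
move=> T P pP; have iP := prime_ideal pP.
case: (pselect (P = [set 0])) => [P0|P0].
  subst P; split.
    exists 0%N; split; first exact: height0.
    split; first by exists [::]; split => //; rewrite span_nil.
    split => // _; exists 0; split; first by exists 1; rewrite oner_neq0 mul0r.
    by rewrite span1 pr0.
  exists 0%N; split; first exact: height0.
  exists [set 0]; split.
    split; first by exists [::]; split => //; rewrite span_nil rad0.
    by move=> B [s [/size0nil -> [-> _]]] _; rewrite span_nil.
  move=> C HC _; apply: (@sub_finite_set _ _ [set [set 0]]); last exact: finite_set1.
  move=> J /HC [iJ [J0 J0']]; apply: seteq => // x /J0' //.
have vP := Hinv iP P0.
have [k [k0 [th Eth]]] := torsion_use T iP vP.
have radth : rad (pr th) = P by rewrite -Eth rad_ipw.
split.
  exists 1%N; split; first exact: height1 ded_dim1 pP P0.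
  split; first by exists [:: th]; split => //; rewrite span1 radth rad_prime.
  split => // s; case: s => // Hs; exfalso; apply: P0.
  by rewrite -(rad_prime pP) Hs span_nil rad0.
exists 1%N; split; first exact: height1 ded_dim1 pP P0.
have [j [[j0 [th' Eth']] jmin]] := ex_min_nat
  (ex_intro (fun j => (0 < j)%N /\ exists d, ipw P j = pr d) k (conj k0 (ex_intro _ th Eth))).
exists (pr th'); split.
  split; first by exists [:: th']; rewrite span1 -Eth' rad_ipw.
  move=> B [s [Hs [-> radB]]] AB.
  case: s Hs radB AB => [|b [|]] // _; rewrite span1 => radB AB.
  have BP : pr b `<=` P by rewrite -radB; apply: rad_sub.
  have AB' : ipw P j `<=` pr b by rewrite Eth'.
  have [i [i0 ij Ei]] := powers_between pP P0 (ideal_pr b) j0 AB' BP.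
  have ji := jmin i (conj i0 (ex_intro _ b (esym Ei))).
  have eij : i = j by apply/eqP; rewrite eqn_leq ij ji.
  by rewrite Ei eij Eth'.
move=> C HC _.
apply: (@sub_finite_set _ _ ((fun i => ipw P i) @` `I_j.+1)).
  move=> J /HC [iJ [AJ JP]].
  have AJ' : ipw P j `<=` J by rewrite Eth'.
  have [i [i0 ij Ei]] := powers_between pP P0 iJ j0 AJ' JP.
  by exists i => //; rewrite /= ltnS.
by apply: finite_image; apply: finite_II.
Qed.

End L9.

Section L10.
Variable R : idomainType.
Implicit Types I J X Y P Q A B C D U L : set R.

Lemma ideal_mulpre I t : is_ideal I -> is_ideal [set x | I (t * x)].
Proof.
move=> iI; split; first by rewrite /= mulr0; apply: ideal0.
split; first by move=> x y; rewrite /= mulrDr; apply: idealD.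
by move=> r x; rewrite /= mulrCA; apply: idealM.
Qed.

Lemma ideal_scale I t : is_ideal I -> is_ideal (scale t I).
Proof. by move=> iI; rewrite -iprod_pr //; apply: ideal_iprod; apply: ideal_pr. Qed.

Lemma addpr_min I a L : is_ideal L -> I `<=` L -> L a -> addpr I a `<=` L.
Proof. by move=> iL IL La z [m [r [Im ->]]]; apply: idealD => //; [apply: IL|apply: idealMr]. Qed.

Hypothesis pf : prufer_domain R.

Lemma pinv (s : seq R) : span s <> [set 0] -> inv (span s).
Proof.
move=> s0; apply: inv_of_frac; first exact: ideal_span.
exact: (pf (ideal_span s) s0 (ex_intro _ s erefl)).
Qed.

Lemma elem_prufer (a c : R) : a != 0 -> exists e, pr c (e * a) /\ pr a ((1 - e) * c).
Proof.
move=> a0.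
have S0 : span [:: a; c] <> [set 0].
  by apply: (nonzero_of (x := a)) => //; apply: span_gen; rewrite mem_head.
have [J [iJ [d [d0 E]]]] := pinv S0.
rewrite span2 in E.
pose W := [set z | exists u v, J u /\ J v /\ z = a * u + c * v].
have iW : is_ideal W.
  split; first by exists 0, 0; split; [apply: ideal0|split; [apply: ideal0|rewrite !mulr0 addr0]].
  split.
    move=> _ _ [u1 [v1 [J1 [J1' ->]]]] [u2 [v2 [J2 [J2' ->]]]].
    exists (u1 + u2), (v1 + v2); split; first exact: idealD.
    by split; [apply: idealD|ring].
  move=> r _ [u [v [Ju [Jv ->]]]]; exists (r * u), (r * v).
  by split; [apply: idealM|split; [apply: idealM|ring]].
have : W d.
  have HW : iprod [set z | exists x y, z = a * x + c * y] J `<=` W.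
    apply: iprod_min => // _ j [x [y ->]] Jj; exists (x * j), (y * j).
    by split; [apply: idealM|split; [apply: idealM|ring]].
  by apply: HW; rewrite E; apply: pr_self.
case=> u [v [Ju [Jv Ed]]].
have inS : forall x y, J y -> pr d ((a * x + c * 0) * y) /\ pr d ((a * 0 + c * x) * y).
  by move=> x y Jy; rewrite -E; split; apply: iprod_prod => //; [exists x, 0|exists 0, x].
have [[al Eal] _] := inS 1 v Jv; have [_ [be Ebe]] := inS 1 u Ju.
have [[de Ede] _] := inS 1 u Ju; have [_ [ga Ega]] := inS 1 v Jv.
rewrite !mulr0 !addr0 !add0r !mulr1 in Eal Ebe Ede Ega.
have sum1 : de + ga = 1.
  by apply: (mulfI d0); rewrite mulrDr -Ede -Ega mulr1 -Ed.
exists ga; split.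
  exists al; apply: (mulfI d0); rewrite mulrA -Ega -mulrA (mulrC v a) Eal; ring.
exists be; apply: (mulfI d0).
have -> : 1 - ga = de by rewrite -sum1 addrK.
rewrite [LHS]mulrA -Ede -mulrA (mulrC u c) Ebe; ring.
Qed.

Lemma collect_prod P (T : set R) (s : seq R) : is_prime_ideal P ->
  (forall a, a \in s -> exists w, ~ P w /\ T (w * a)) -> is_ideal T ->
  exists t, ~ P t /\ forall a, a \in s -> T (t * a).
Proof.
move=> pP; elim: s => [|a s IH] H iT.
  by exists 1; split => //; apply: prime_not1.
have [|//|t [Pt Ht]] := IH; first by move=> b bs; apply: H; rewrite inE bs orbT.
have [w [Pw Tw]] := H a (mem_head _ _).
exists (w * t); split; first exact: prime_mulN.
move=> b; rewrite inE => /orP [/eqP ->|bs].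
  by rewrite (mulrC w) -mulrA; apply: idealM.
by rewrite -mulrA; apply: idealM => //; apply: Ht.
Qed.

Hypothesis rf : radically_finite R.

Lemma prufer_dim1 : dim1 R.
Proof.
move=> Q P pQ pP Q0 [QP nPQ].
have iQ := prime_ideal pQ; have iP := prime_ideal pP.
have [_ [n [_ [A [[[s [_ [EA radA]]] _] chA]]]]] := rf pQ.
have [c [Pc nQc]] := not_sub_ex nPQ.
have iA : is_ideal A by rewrite EA; apply: ideal_span.
have AQ : A `<=` Q by rewrite -radA; apply: rad_sub.
have A0 : A <> [set 0].
  have [q Qq q0] := nonzeroP iQ Q0; rewrite -radA in Qq; case: Qq => m Am.
  by apply: (nonzero_of Am); rewrite expf_neq0.
have vA : inv A by rewrite EA; apply: pinv; rewrite -EA.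
have nQcp : forall j, ~ Q (c ^+ j) by move=> j /(prime_pow pQ).
pose f j := [set x | A (c ^+ j * x)].
have fi : forall j, is_ideal (f j) by move=> j; apply: ideal_mulpre.
have fmono : forall j, f j `<=` f j.+1.
  by move=> j x; rewrite /f /= exprS -mulrA; apply: idealM.
have [j fj] : exists j, f j.+1 `<=` f j.
  apply: (@mono_stab _ (range f) f); [by move=> i; exists i| exact: fmono|].
  apply: chA.
    move=> _ [i _ <-]; split => //; split.
      by move=> x Ax; rewrite /f /=; apply: idealM.
    move=> x; rewrite /f /= => /AQ /(prime_mul pQ) [/nQcp //|//].
  move=> _ _ [i _ <-] [k _ <-]; case: (leqP i k) => ik.
    left; move: ik => /subnKC <-; elim: (k - i)%N => [|l IHl]; first by rewrite addn0.
    by rewrite addnS; apply: subset_trans IHl (fmono _).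
  right; move: (ltnW ik) => /subnKC <-; elim: (i - k)%N => [|l IHl]; first by rewrite addn0.
  by rewrite addnS; apply: subset_trans IHl (fmono _).
have c0 : c != 0 by apply/eqP => c0; apply: nQc; rewrite c0; apply: ideal0.
have step : forall y, Q y -> exists e y', ~ P e /\ Q y' /\ c * y' = e * y.
  move=> y Qy; case: (eqVneq y 0) => [->|y0].
    by exists 1, 0; split; [apply: prime_not1|split; [apply: ideal0|rewrite !mulr0]].
  have [e [[y' Ey'] [z Ez]]] := elem_prufer c y0.
  exists e, y'; split.
    move=> Pe; have : Q (1 - e).
      have : Q ((1 - e) * c) by rewrite Ez; apply: idealMr.
      by case/(prime_mul pQ) => // /nQc.
    move/QP => P1e; apply: (prime_not1 pP).
    by rewrite -(subrK e 1); apply: idealD.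
  split; last by rewrite Ey'.
  have : Q (c * y') by rewrite -Ey'; apply: idealM.
  by case/(prime_mul pQ) => // /nQc.
have iter_step : forall a, Q a -> forall k, exists w y, ~ P w /\ Q y /\ c ^+ k * y = w * a.
  move=> a Qa; elim => [|k [w [y [Pw [Qy Ek]]]]].
    by exists 1, a; split; [apply: prime_not1|split; [|rewrite expr0]].
  have [e [y' [Pe [Qy' Ey']]]] := step y Qy.
  exists (e * w), y'; split; first exact: prime_mulN.
  split => //; rewrite exprSr -mulrA Ey' mulrCA Ek; ring.
have [t [Pt Ht]] : exists t, ~ P t /\ forall a, a \in s -> scale c A (t * a).
  apply: collect_prod => //; last exact: ideal_scale.
  move=> a as_; have Aa : A a by rewrite EA; apply: span_gen.
  have [w [y [Pw [Qy Ey]]]] := iter_step a (AQ a Aa) j.+1.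
  exists w; split => //; exists (c ^+ j * y); split; last by rewrite mulrA -exprS Ey.
  by apply: fj; rewrite /f /= Ey; apply: idealM.
have tA : scale t A `<=` scale c A.
  move=> _ [x [Ax ->]]; move: x Ax; rewrite {1}EA.
  apply: span_sub; first by apply: ideal_mulpre; apply: ideal_scale.
  exact: Ht.
have : iprod A (pr t) `<=` iprod A (pr c) by rewrite !(iprodC A) !iprod_pr.
move/(inv_cancel iA vA (ideal_pr t) (ideal_pr c))/(_ t (pr_self t)) => [r Er].
by apply: Pt; rewrite Er; apply: idealMr.
Qed.

End L10.

Section L11.
Variable R : idomainType.
Implicit Types I J X Y P Q A B C D U L : set R.
Hypothesis pf : prufer_domain R.
Hypothesis rf : radically_finite R.

Let d1 := prufer_dim1 pf rf.

Lemma prime_data P : is_prime_ideal P -> P <> [set 0] ->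
  exists th, rad (pr th) = P /\ chains_between_finite (pr th) P.
Proof.
move=> pP P0; have [_ [n [hn [A [[[s [sz [EA radA]]] _] chA]]]]] := rf pP.
have n1 := height_unique hn (height1 d1 pP P0); rewrite n1 in sz.
case: s sz EA => [|th [|]] // _ EA; exists th.
by rewrite -span1 -EA.
Qed.

Lemma unit_mod P th u : is_prime_ideal P -> P <> [set 0] -> rad (pr th) = P -> ~ P u ->
  exists al be, u * al + th * be = 1.
Proof.
move=> pP P0 radth Pu.
case: (pselect (addpr (pr th) u 1)) => [[m [r [[be ->] E]]]|H].
  by exists r, be; rewrite E addrC.
have [M [pM HM]] := exists_prime (ideal_addpr u (ideal_pr th)) H.
have PM : P `<=` M.
  apply: (rad_in_prime pM radth); apply: subset_trans HM; exact: addpr_sub.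
exfalso; apply: Pu; apply: (prime_above d1 pP P0 pM PM); apply: HM; apply: addpr_a.
exact: ideal_pr.
Qed.

Lemma total_addpr P th x y : is_prime_ideal P -> P <> [set 0] -> rad (pr th) = P ->
  P x -> P y ->
  addpr (pr th) x `<=` addpr (pr th) y \/ addpr (pr th) y `<=` addpr (pr th) x.
Proof.
move=> pP P0 radth Px Py; have ith := ideal_pr th.
have key : forall a b e z, ~ P e -> e * a = b * z -> addpr (pr th) a `<=` addpr (pr th) b.
  move=> a b e z Pe Eab; have [al [be Eu]] := unit_mod pP P0 radth Pe.
  apply: addpr_min; [exact: ideal_addpr|exact: addpr_sub|].
  exists (th * (be * a)), (z * al); split; first exact: pr_mul.
  transitivity ((e * al + th * be) * a); first by rewrite Eu mul1r.
  by rewrite mulrDl (mulrC e al) -!mulrA Eab; ring.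
case: (eqVneq x 0) => [->|x0].
  left; apply: addpr_min; [exact: ideal_addpr|exact: addpr_sub|].
  by exists 0, 0; split; [apply: ideal0|rewrite mulr0 addr0].
have [e [[z Ez] [w Ew]]] := elem_prufer pf y x0.
case: (pselect (P e)) => Pe.
  right; apply: (key y x (1 - e) w) => // P1e; apply: (prime_not1 pP).
  by rewrite -(subrK e 1); apply: idealD => //; exact: prime_ideal.
by left; apply: (key x y e z).
Qed.

Lemma prime_fg P : is_prime_ideal P -> P <> [set 0] ->
  exists th x, rad (pr th) = P /\ P = addpr (pr th) x.
Proof.
move=> pP P0; have iP := prime_ideal pP.
have [th [radth chA]] := prime_data pP P0; exists th.
have thP : pr th `<=` P by rewrite -radth; apply: rad_sub.
have sub : forall x, P x -> addpr (pr th) x `<=` P by move=> x Px; apply: addpr_min.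
case: (pselect (exists x, P x /\ P = addpr (pr th) x)) => [[x [_ E]]|H].
  by exists x.
exfalso.
have nx : forall x, exists y, P x -> P y /\ addpr (pr th) x `<` addpr (pr th) y.
  move=> x; case: (pselect (P x)) => Px; last by exists x.
  have nsub : ~ P `<=` addpr (pr th) x.
    by move=> H2; apply: H; exists x; split => //; apply: seteq => //; apply: sub.
  have [y [Py nxy]] := not_sub_ex nsub; exists y => _; split => //.
  have ya : addpr (pr th) y y by apply: addpr_a; apply: ideal_pr.
  case: (total_addpr pP P0 radth Px Py) => H3.
    by split => // H4; apply: nxy; apply: H4.
  by exfalso; apply: nxy; apply: H3.
have [g Hg] := choice nx.
pose s n := iter n g th.
have Ps : forall n, P (s n).
  elim => [|n IH]; first by apply: thP; apply: pr_self.
  by have [] := Hg _ IH.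
pose f n := addpr (pr th) (s n).
apply: (@no_strict_chain _ (range f) f); first by move=> n; exists n.
  by move=> n; have [_] := Hg _ (Ps n).
apply: chA.
  move=> _ [n _ <-]; split; first exact: ideal_addpr (ideal_pr th).
  by split; [apply: addpr_sub|apply: sub].
by move=> _ _ [i _ <-] [j _ <-]; exact: total_addpr pP P0 radth (Ps i) (Ps j).
Qed.

Lemma prime_pp P : is_prime_ideal P -> P <> [set 0] ->
  inv P /\ exists k, (0 < k)%N /\ exists d, ipw P k = pr d.
Proof.
move=> pP P0; have iP := prime_ideal pP.
have [th [x [radth EP]]] := prime_fg pP P0.
have thP : pr th `<=` P by rewrite -radth; apply: rad_sub.
have vP : inv P.
  have -> : P = span [:: th; x].
    rewrite span2 EP; apply: seteq => z.
      by case=> m [r [[a ->] ->]]; exists a, r.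
    by case=> a [b ->]; exists (th * a), b; split => //; apply: pr_mul.
  by apply: (pinv pf); rewrite -[X in X <> _](_ : P = span [:: th; x]) //;
    rewrite span2 EP; apply: seteq => z;
    [case=> m [r [[a ->] ->]]; exists a, r| case=> a [b ->]; exists (th * a), b; split => //; apply: pr_mul].
split => //.
have main : forall m, ipw P m `<=` pr th -> exists k, (0 < k)%N /\ exists d, ipw P k = pr d.
  elim => [|m IH] H.
    by exfalso; apply: (prime_not1 pP); apply: thP; apply: H.
  pose J := [set y | ipw P m.+1 (th * y)].
  have iJ : is_ideal J by apply: ideal_mulpre; apply: ideal_ipw.
  have E : ipw P m.+1 = scale th J.
    apply: seteq => z; last by case=> y [Jy ->].
    by move=> Hz; have [r Er] := H z Hz; exists r; split => //; rewrite /J /= -Er.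
  case: (pselect (J 1)) => [J1|nJ1].
    exists m.+1; split => //; exists th; rewrite E (ideal_1 iJ J1).
    by apply: seteq => z; [case=> y [_ ->]; apply: pr_mul|case=> r ->; exists r].
  have [M [pM JM]] := exists_prime iJ nJ1.
  have PJ : ipw P m.+1 `<=` J.
    by move=> z Hz; exact: (idealM th (ideal_ipw m.+1 iP) Hz).
  have PM : P `<=` M by apply: (ipw_prime (n := m.+1)) => //; apply: subset_trans PJ JM.
  have JP : J `<=` P by apply: subset_trans JM _; exact: (prime_above d1 pP P0 pM PM).
  apply: IH; apply: (inv_cancel iP vP) => //; [exact: ideal_ipw|exact: ideal_pr|].
  rewrite -ipwS E iprodC iprod_pr //.
  by move=> z [y [Jy ->]]; exists y; split => //; apply: JP.
have xP : P x by rewrite EP; apply: addpr_a; apply: ideal_pr.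
have [N HN] : rad (pr th) x by rewrite radth.
apply: (main N.+1).
have pw : forall k, ipw P k.+1 `<=` addpr (pr th) (x ^+ k.+1).
  elim => [|k IH]; first by rewrite ipw1 // expr1 -EP.
  rewrite ipwS; apply: subset_trans (iprodS (@subset_refl _ P) IH) _.
  rewrite {1}EP; apply: iprod_min; first by apply: ideal_addpr; apply: ideal_pr.
  move=> _ _ [m1 [r1 [[a1 ->] ->]]] [m2 [r2 [[a2 ->] ->]]].
  exists (th * (a1 * (th * a2 + x ^+ k.+1 * r2) + x * r1 * a2)), (r1 * r2).
  by split; [apply: pr_mul|rewrite !exprS; ring].
apply: subset_trans (pw N) _; apply: addpr_min; [exact: ideal_pr|by []|].
by rewrite exprS; apply: idealM => //; exact: ideal_pr.
Qed.

End L11.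

Section L12.
Variable R : idomainType.
Implicit Types I J X Y P Q A B C D U L : set R.

Lemma chain_list (F : set (set R)) (l : seq (R * R)) : F !=set0 -> total_on F subset ->
  (forall p, p \in l -> (\bigcup_(X in F) X) p.1) ->
  exists2 X, F X & forall p, p \in l -> X p.1.
Proof.
move=> [X0 FX0] tot; elim: l => [|p l IH] H; first by exists X0.
have [|X FX HX] := IH; first by move=> q ql; apply: H; rewrite inE ql orbT.
have [Y FY Yp] := H p (mem_head _ _).
case: (tot X Y FX FY) => XY.
  exists Y => // q; rewrite inE => /orP [/eqP -> //|ql]; exact: XY (HX q ql).
exists X => // q; rewrite inE => /orP [/eqP ->|ql]; [exact: XY|exact: HX].
Qed.

Lemma chain_inv_member (F : set (set R)) : (forall X, F X -> is_ideal X) ->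
  F !=set0 -> total_on F subset -> inv (\bigcup_(X in F) X) ->
  exists2 X, F X & X = \bigcup_(X in F) X.
Proof.
move=> Fi Fne tot [J [iJ [d [d0 E]]]].
have iU := chain_union_ideal Fi Fne tot.
have : iprod (\bigcup_(X in F) X) J d by rewrite E; apply: pr_self.
case=> l [Hl Ed].
have [X FX HX] := chain_list Fne tot (fun p pl => proj1 (Hl p pl)).
exists X => //; apply: seteq; first by move=> x Xx; exists X.
apply: (inv_sub iU iJ (Fi X FX) d0 E); exists l; split => //.
by move=> p pl; split; [apply: HX|case: (Hl p pl)].
Qed.

Hypothesis pf : prufer_domain R.
Hypothesis rf : radically_finite R.

Lemma nonzero_sub I J : is_ideal I -> I <> [set 0] -> I `<=` J -> J <> [set 0].
Proof. by move=> iI I0 IJ; have [x Ix x0] := nonzeroP iI I0; apply: (nonzero_of (IJ x Ix)). Qed.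

Lemma union_nonzero (F : set (set R)) : (forall X, F X -> is_ideal X /\ X <> [set 0]) ->
  F !=set0 -> \bigcup_(X in F) X <> [set 0].
Proof.
move=> H [X FX]; have [iX X0] := H X FX.
by apply: (nonzero_sub iX X0) => x Xx; exists X.
Qed.

Lemma all_inv I : is_ideal I -> I <> [set 0] -> inv I.
Proof.
move=> iI I0; case: (pselect (inv I)) => // nvI; exfalso.
pose S := [set X : set R | is_ideal X /\ X <> [set 0] /\ ~ inv X].
have [M0 [[iM [M00 nvM]] Mmax]] : exists M0, S M0 /\ forall B, M0 `<` B -> ~ S B.
  apply: (@zorn_ne _ S I); first by split.
    by exists 0; apply: ideal0.
  move=> F FS Fne tot; have Fi : forall X, F X -> is_ideal X by move=> X /FS [].
  split; first exact: chain_union_ideal.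
  split; first by apply: union_nonzero => // X /FS [? []].
  by move=> vU; have [X FX EX] := chain_inv_member Fi Fne tot vU; case: (FS X FX) => _ [_]; rewrite EX.
have notS : forall B, M0 `<` B -> is_ideal B -> inv B.
  move=> B MB iB; case: (pselect (inv B)) => // nB; exfalso; apply: (Mmax B MB).
  by split => //; split => //; apply: (nonzero_sub iM M00); case: MB.
have pM : is_prime_ideal M0.
  split => //; split.
    by move=> M1; apply: nvM; rewrite (ideal_1 iM M1); exact: inv_T.
  move=> a b Mab; case: (pselect (M0 a)) => Ma; first by left.
  case: (pselect (M0 b)) => Mb; first by right.
  exfalso.
  have iJa := ideal_addpr a iM.
  have vJa : inv (addpr M0 a).
    apply: notS => //; split; first exact: addpr_sub.
    by move=> H; apply: Ma; apply: H; apply: addpr_a.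
  pose L := [set x | M0 (a * x)].
  have iL : is_ideal L by apply: ideal_mulpre.
  have vL : inv L.
    apply: notS => //; split; first by move=> x Mx; rewrite /L /=; apply: idealM.
    by move=> H; apply: Mb; apply: H.
  have [D [iD ED]] := inv_div iJa vJa iM (@addpr_sub _ M0 a).
  have DL : D `<=` L.
    by move=> x Dx; rewrite /L /= -ED; apply: iprod_prod => //; apply: addpr_a.
  have EM : M0 = iprod (addpr M0 a) L.
    apply: seteq.
      by rewrite -{1}ED; apply: iprodS.
    apply: iprod_min => // _ x [m [r [Mm ->]]] Lx.
    have -> : (m + a * r) * x = x * m + r * (a * x) by ring.
    by apply: idealD => //; apply: idealM.
  by apply: nvM; have := inv_mul iJa iL vJa vL; rewrite -EM.
by apply: nvM; case: (prime_pp pf rf pM M00).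
Qed.

Definition HP I := exists k, (0 < k)%N /\ exists d, ipw I k = pr d.

Lemma HP_mul A B : is_ideal A -> is_ideal B -> HP A -> HP B -> HP (iprod A B).
Proof.
move=> iA iB [k0 [k00 [d0 E0]]] [k1 [k10 [d1 E1]]].
exists (k0 * k1)%N; split; first by rewrite muln_gt0 k00.
exists (d0 ^+ k1 * d1 ^+ k0).
rewrite ipw_iprod // ipwM // E0 ipw_pr mulnC ipwM // E1 ipw_pr.
exact: iprod_prpr.
Qed.

Lemma all_HP I : is_ideal I -> I <> [set 0] -> HP I.
Proof.
move=> iI I0; case: (pselect (HP I)) => // nI; exfalso.
pose S := [set X : set R | is_ideal X /\ X <> [set 0] /\ ~ HP X].
have [M0 [[iM [M00 nM]] Mmax]] : exists M0, S M0 /\ forall B, M0 `<` B -> ~ S B.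
  apply: (@zorn_ne _ S I); first by split.
    by exists 0; apply: ideal0.
  move=> F FS Fne tot; have Fi : forall X, F X -> is_ideal X by move=> X /FS [].
  have iU := chain_union_ideal Fi Fne tot.
  have U0 : \bigcup_(X in F) X <> [set 0] by apply: union_nonzero => // X /FS [? []].
  split => //; split => //.
  have [X FX EX] := chain_inv_member Fi Fne tot (all_inv iU U0).
  by case: (FS X FX) => _ [_]; rewrite EX.
have nM1 : ~ M0 1.
  move=> M1; apply: nM; rewrite (ideal_1 iM M1); exists 1%N; split => //.
  by exists 1; rewrite ipw1 // pr1.
have [M [pM MM]] := exists_prime iM nM1.
have iMM := prime_ideal pM.
have M0' : M <> [set 0] by apply: (nonzero_sub iM M00).
have [vM HPM] := prime_pp pf rf pM M0'.
have [D [iD ED]] := inv_div iMM vM iM MM.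
have MD : M0 `<=` D by rewrite -ED; apply: iprod_subr.
have nDM : ~ D `<=` M0.
  move=> DM; have ED' : D = M0 by apply: seteq.
  have vM0 := all_inv iM M00.
  have : iprod M0 M = iprod M0 setT.
    by rewrite iprodT // iprodC ED' in ED *; rewrite ED.
  move/(inv_cancel_eq iM vM0 iMM (idealT R)) => EM.
  by apply: (prime_not1 pM); rewrite EM.
have HPD : HP D.
  case: (pselect (HP D)) => // nD; exfalso; apply: (Mmax D); first by split.
  by split => //; split => //; apply: (nonzero_sub iM M00).
by apply: nM; rewrite -ED; apply: HP_mul.
Qed.

End L12.

Theorem corollary2p3 (R : idomainType) :
  prufer_domain R -> finite_krull_dim R ->
  (radically_finite R <-> dedekind_domain R /\ class_group_torsion R).
Proof.
move=> pf _; split.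
  move=> rf; split.
    by move=> I iI I0; apply: frac_of_inv iI (all_inv pf rf iI I0).
  apply: torsion_of => I iI vI; apply: (all_HP pf rf iI).
  by have [x Ix x0] := inv_nonzero iI vI; apply: (nonzero_of Ix x0).
case=> ded T; apply: (radfin_of _ T).
by move=> I iI I0; apply: inv_of_frac iI (ded I iI I0).
Qed.
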